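(* Let $U \subset \mathbb{R}^n$ be a relatively compact open subanalytic set and $X = \overline{U} \setminus U$. Let $\pi: \mathbb{R}^n \to \mathbb{R}^{n-1}$ be the standard projection $\pi(x', x_n) = x'$, with $\pi|_X$ finite, and let $\Delta_\pi$ be its discriminant set. Fix $C, \varepsilon > 0$, let $x_0 \in U$, and suppose $\pi$ is $(C, \varepsilon)$-regular at $x_0$ with respect to $X$. Write $x_0' = \pi(x_0)$ and $\mathscr{C} = \{x_0 + \lambda(\eta, 1) : \eta \in \mathbb{R}^{n-1}, |\eta| < \varepsilon,\ \lambda \in \mathbb{R} \setminus \{0\}\}$. Let $\tilde C \ge 1$ be a constant such that $$\operatorname{dist}(x_0, X \setminus \mathscr{C}) \le \tilde C \operatorname{dist}(x_0', \pi(X \setminus \mathscr{C})) \le \tilde C \operatorname{dist}(x_0', \Delta_\pi).$$ Let $U'$ be an open subanalytic subset of $\pi(U) \setminus \Delta_\pi$ such that $x_0' \in U'$ and $$\operatorname{dist}(x_0', \Delta_\pi) \le \tilde C \operatorname{dist}(x_0', \partial U').$$ Let $U_1$ be the member of the cylindrical decomposition of $U \cap \pi^{-1}(U')$ containing $x_0$. Then $$\operatorname{dist}(x_0, X) \le \tilde C^2 \operatorname{dist}(x_0, \partial U_1).$$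
   Context: For an open set $W$, $\partial W = \overline{W} \setminus W$. Let $\operatorname{Reg}(X)$ be the set of points of $X$ where $X$ is locally a real analytic submanifold of dimension $n-1$, and $Z = X \setminus \operatorname{Reg}(X)$; the discriminant set $\Delta_\pi$ is the union of $\pi(Z)$ and the critical values of $\pi|_{\operatorname{Reg}(X)}$. The projection $\pi$ is $(C,\varepsilon)$-regular at $x_0$ with respect to $X$ if: (a) $\pi|_X$ is finite; (b) $X \cap \mathscr{C}$ is empty or a finite disjoint union of sets $\{x_0 + \lambda_i(\eta)(\eta, 1) : |\eta| < \varepsilon\}$ with $\lambda_i$ real analytic nowhere vanishing functions on $\{|\eta| < \varepsilon\}$; (c) $\|\operatorname{grad} \lambda_i(\eta)\| \le C|\lambda_i(\eta)|$ for all $|\eta| < \varepsilon$. Cylindrical decomposition: if $U'_0$ is the connected component of $U'$ containing $x_0'$, then $X \cap \pi^{-1}(U'_0)$ is the union of the graphs of finitely many bounded real analytic functions $\varphi_1 < \dots < \varphi_k$ on $U'_0$, and the member containing $x_0$ is the set $U_1 = \{(x', x_n) : x' \in U'_0,\ \varphi_i(x') < x_n < \varphi_{i+1}(x')\}$ that contains $x_0$. *)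

(* Defs.v *)
(* Points of R^n are row vectors 'rV[R]_(m+1), n = m+1. *)
From HB Require Import structures.
From mathcomp Require Import all_boot all_order all_algebra.
From mathcomp Require Import all_classical all_reals all_analysis.
Set Implicit Arguments. Unset Strict Implicit. Unset Printing Implicit Defensive.
Import Order.TTheory GRing.Theory Num.Theory.
Import numFieldNormedType.Exports.
Local Open Scope classical_set_scope.
Local Open Scope ring_scope.

Section Defs.
Variable R : realType.

Definition enorm k (v : 'rV[R]_k) : R := Num.sqrt (\sum_(i < k) v 0 i ^+ 2).

(* Euclidean distance from a point to a set, in \bar R (dist(x, set0) = +oo) *)
Definition set_edist k (x : 'rV[R]_k) (A : set 'rV[R]_k) : \bar R :=
  ereal_inf [set (enorm (x - a))%:E | a in A].

Definition bdry k (W : set 'rV[R]_k) : set 'rV[R]_k := closure W `\` W.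

Definition psum k (c : ('I_k -> nat) -> R) (a x : 'rV[R]_k) (N : nat) : R :=
  \sum_(al : {ffun 'I_k -> 'I_N})
     c (fun i => nat_of_ord (al i)) * \prod_(i < k) (x 0 i - a 0 i) ^+ (al i).

Definition pabssum k (c : ('I_k -> nat) -> R) (a x : 'rV[R]_k) (N : nat) : R :=
  \sum_(al : {ffun 'I_k -> 'I_N})
     `|c (fun i => nat_of_ord (al i))| * \prod_(i < k) `|x 0 i - a 0 i| ^+ (al i).

Definition analytic_on k (D : set 'rV[R]_k) (f : 'rV[R]_k -> R) : Prop :=
  forall a, D a -> exists r : R, 0 < r /\ exists c : ('I_k -> nat) -> R,
    forall x, D x -> enorm (x - a) < r ->
      (exists M : R, forall N, pabssum c a x N <= M) /\
      (psum c a x N @[N --> \oo] --> f x).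

Definition semianalytic k (A : set 'rV[R]_k) : Prop :=
  forall p : 'rV[R]_k, exists V : set 'rV[R]_k, open V /\ V p /\
    exists (np q : nat) (f : nat -> 'rV[R]_k -> R) (g : nat -> nat -> 'rV[R]_k -> R),
      (forall i, (i < np)%N -> analytic_on V (f i)) /\
      (forall i j, (i < np)%N -> (j < q)%N -> analytic_on V (g i j)) /\
      A `&` V = V `&` [set x | exists i, (i < np)%N /\ f i x = 0 /\
                               forall j, (j < q)%N -> 0 < g i j x].

Definition subanalytic k (A : set 'rV[R]_k) : Prop :=
  forall p : 'rV[R]_k, exists V : set 'rV[R]_k, open V /\ V p /\
    exists (l : nat) (B : set 'rV[R]_(k + l)),
      semianalytic B /\ compact (closure B) /\
      A `&` V = (@lsubmx R 1 k l) @` B.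

Variable m : nat.  (* n = m + 1 *)

Definition pi_proj (x : 'rV[R]_(m + 1)) : 'rV[R]_m := lsubmx x.
Definition lastc (x : 'rV[R]_(m + 1)) : R := rsubmx x 0 0.
Definition elast : 'rV[R]_(m + 1) := delta_mx 0 (rshift m ord0).

Definition grad k (f : 'rV[R]_k -> R) (y : 'rV[R]_k) : 'rV[R]_k :=
  \row_(j < k) derive f y (delta_mx 0 j : 'rV[R]_k).

(* X is near x a real analytic submanifold of dimension n-1, given by an
   analytic equation f with nonvanishing gradient *)
Definition hyp_chart (X : set 'rV[R]_(m + 1)) (x : 'rV[R]_(m + 1))
    (V : set 'rV[R]_(m + 1)) (f : 'rV[R]_(m + 1) -> R) : Prop :=
  open V /\ V x /\ analytic_on V f /\
  X `&` V = V `&` [set y | f y = 0] /\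
  (forall y, V y -> grad f y != 0).

Definition Reg (X : set 'rV[R]_(m + 1)) : set 'rV[R]_(m + 1) :=
  [set x | X x /\ exists V f, hyp_chart X x V f].

(* critical points of pi restricted to Reg(X): the tangent hyperplane
   ker (grad f) contains the vertical direction e_n *)
Definition crit_pts (X : set 'rV[R]_(m + 1)) : set 'rV[R]_(m + 1) :=
  [set x | X x /\ exists V f, hyp_chart X x V f /\ derive f x elast = 0].

(* discriminant set Delta_pi = pi(Z) u critical values of pi|Reg(X) *)
Definition discr (X : set 'rV[R]_(m + 1)) : set 'rV[R]_m :=
  pi_proj @` (X `\` Reg X) `|` pi_proj @` crit_pts X.

(* pi|X finite: pi|X has finite fibres (properness is automatic for compact X) *)
Definition proj_finite_on (X : set 'rV[R]_(m + 1)) : Prop :=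
  forall y : 'rV[R]_m, finite_set [set x | X x /\ pi_proj x = y].

Definition eball (eps : R) : set 'rV[R]_m := [set eta | enorm eta < eps].

Definition lift1 (eta : 'rV[R]_m) : 'rV[R]_(m + 1) := row_mx eta (const_mx 1).

Definition cone (x0 : 'rV[R]_(m + 1)) (eps : R) : set 'rV[R]_(m + 1) :=
  [set x0 + lam *: lift1 eta | eta in eball eps & lam in [set l : R | l != 0]].

Definition cone_sheet (x0 : 'rV[R]_(m + 1)) (eps : R) (lam : 'rV[R]_m -> R) :=
  [set x0 + lam eta *: lift1 eta | eta in eball eps].

Definition regular_proj (C eps : R) (x0 : 'rV[R]_(m + 1)) (X : set 'rV[R]_(m + 1)) :=
  proj_finite_on X /\
  exists (k : nat) (lam : nat -> 'rV[R]_m -> R),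
    (forall i, (i < k)%N -> analytic_on (eball eps) (lam i)) /\
    (forall i eta, (i < k)%N -> eball eps eta -> lam i eta != 0) /\
    (forall i j, (i < k)%N -> (j < k)%N -> i != j ->
        cone_sheet x0 eps (lam i) `&` cone_sheet x0 eps (lam j) = set0) /\
    X `&` cone x0 eps = [set x | exists i, (i < k)%N /\ cone_sheet x0 eps (lam i) x] /\
    (forall i eta, (i < k)%N -> eball eps eta ->
        enorm (grad (lam i) eta) <= C * `|lam i eta|).

End Defs.
Arguments pi_proj {R m} x.
Arguments lastc {R m} x.

(* Main.v *)
Require Import Defs.
From HB Require Import structures.
From mathcomp Require Import all_boot all_order all_algebra.
From mathcomp Require Import all_classical all_reals all_analysis.
From mathcomp.algebra_tactics Require Import ring lra.
Import Order.TTheory GRing.Theory Num.Theory.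
Import numFieldNormedType.Exports.
Local Open Scope classical_set_scope.
Local Open Scope ring_scope.

Section H.
Variable R : realType.

Lemma enorm_ge0 k (v : 'rV[R]_k) : 0 <= enorm v.
Proof. exact: sqrtr_ge0. Qed.

Lemma enormZ k (a : R) (v : 'rV[R]_k) : enorm (a *: v) = `|a| * enorm v.
Proof.
rewrite /enorm.
have -> : \sum_i (a *: v) 0 i ^+ 2 = a ^+ 2 * \sum_i v 0 i ^+ 2.
  by rewrite mulr_sumr; apply: eq_bigr => i _; rewrite mxE exprMn.
by rewrite sqrtrM ?sqr_ge0 // sqrtr_sqr.
Qed.

Lemma enormN k (v : 'rV[R]_k) : enorm (- v) = enorm v.
Proof. by rewrite -scaleN1r enormZ normrN normr1 mul1r. Qed.

Lemma enormB k (u v : 'rV[R]_k) : enorm (u - v) = enorm (v - u).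
Proof. by rewrite -opprB enormN. Qed.

Lemma enorm0 k : enorm (0 : 'rV[R]_k) = 0.
Proof. by rewrite -(scale0r (0 : 'rV[R]_k)) enormZ normr0 mul0r. Qed.

Lemma enorm_lsub m (v : 'rV[R]_(m + 1)) : enorm (lsubmx v) <= enorm v.
Proof.
rewrite /enorm ler_sqrt; last by apply: sumr_ge0 => i _; exact: sqr_ge0.
rewrite [leRHS]big_split_ord /=.
have -> : \sum_(i < m) lsubmx v 0 i ^+ 2 = \sum_(i < m) v 0 (lshift 1 i) ^+ 2.
  by apply: eq_bigr => i _; rewrite mxE.
by rewrite lerDl; apply: sumr_ge0 => i _; exact: sqr_ge0.
Qed.

Lemma cont_sum (T : topologicalType) (I : Type) (r : seq I) (F : I -> T -> R) :
  (forall i, continuous (F i)) -> continuous (fun x => \sum_(i <- r) F i x).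
Proof.
move=> FC; elim: r => [|a r IH].
  have -> : (fun x => \sum_(i <- [::]) F i x) = fun=> 0.
    by apply: funext => x; rewrite big_nil.
  exact: cst_continuous.
have -> : (fun x => \sum_(i <- a :: r) F i x) = F a + (fun x => \sum_(i <- r) F i x).
  by apply: funext => x; rewrite big_cons.
by move=> x; apply: continuousD; [exact: FC | exact: IH].
Qed.

Lemma enorm_cont k : continuous (@enorm R k).
Proof.
move=> v; rewrite /enorm.
apply: (continuous_comp (f := fun v : 'rV[R]_k => \sum_i v 0 i ^+ 2)
   (g := Num.sqrt)); last exact: sqrt_continuous.
apply: (@cont_sum _ _ _ (fun i (v : 'rV[R]_k) => v 0 i ^+ 2)) => i w.
have -> : (fun v : 'rV[R]_k => v 0 i ^+ 2) = (fun v => v 0 i) \* (fun v => v 0 i).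
  by apply: funext => u; rewrite /= expr2.
by apply: continuousM; exact: coord_continuous.
Qed.


Lemma geom_le (q : R) n : 0 <= q -> q <= 1/2 -> \sum_(l < n.+1) q ^+ l <= 1 + 2 * q.
Proof.
move=> q0 q1.
suff : \sum_(l < n.+1) q ^+ l <= 1 + 2 * q - 2 * q ^+ n.+1.
  by move=> H; apply: (le_trans H); rewrite lerBlDr lerDl mulr_ge0 // exprn_ge0.
elim: n => [|n IH]; first by rewrite big_ord1 expr0 expr1; lra.
rewrite big_ord_recr /= (exprS q n.+1).
have h0 : 0 <= q ^+ n.+1 by rewrite exprn_ge0.
have h1 : 2 * (q * q ^+ n.+1) <= q ^+ n.+1 by nra.
lra.
Qed.

Lemma bern_le (u : R) k : 0 <= u -> u <= 1 -> (1 + u) ^+ k - 1 <= u * 2 ^+ k.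
Proof.
move=> u0 u1; elim: k => [|k IH]; first by rewrite !expr0 mulr1; lra.
have h : (1 + u) ^+ k <= 2 ^+ k.
  by apply: lerXn2r; rewrite ?nnegrE; lra.
rewrite !exprS mulrDl mul1r.
have h2 : u * (1 + u) ^+ k <= u * 2 ^+ k by apply: ler_wpM2l.
lra.
Qed.

Lemma sum_prod_bound k N (q : R) : 0 <= q -> q <= 1/2 -> (0 < N)%N ->
  \sum_(al : {ffun 'I_k -> 'I_N}) (\prod_i q ^+ al i - \prod_i (0:R) ^+ al i)
   <= 2 * q * 2 ^+ k.
Proof.
move=> q0 q1; case: N => [//|n] _.
rewrite sumrB -(bigA_distr_bigA (fun (i : 'I_k) (j : 'I_n.+1) => q ^+ j)).
rewrite -(bigA_distr_bigA (fun (i : 'I_k) (j : 'I_n.+1) => (0:R) ^+ j)) /=.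
rewrite !prodr_const card_ord.
have -> : \sum_(j < n.+1) (0:R) ^+ j = 1.
  by rewrite big_ord_recl expr0 big1 ?addr0 // => i _; rewrite expr0n.
rewrite expr1n.
have hA := @geom_le q n q0 q1.
have hA0 : 0 <= \sum_(j < n.+1) q ^+ j by apply: sumr_ge0 => i _; exact: exprn_ge0.
have := @bern_le (2 * q) k.
move=> /(_ ltac:(lra) ltac:(lra)) hb.
have : (\sum_(j < n.+1) q ^+ j) ^+ k <= (1 + 2 * q) ^+ k.
  by apply: lerXn2r; rewrite ?nnegrE //; lra.
lra.
Qed.

Lemma ball_rV k (w x : 'rV[R]_k) e : 0 < e -> (forall i, `|w 0 i - x 0 i| < e) -> ball w e x.
Proof. move=> e0 H; split => // i j; rewrite (ord1 i); exact: H. Qed.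

Lemma ball_rV' k (w x : 'rV[R]_k) e : ball w e x -> forall i, `|w 0 i - x 0 i| < e.
Proof. by move=> [_ H] i; exact: H. Qed.

Lemma near_pos : \forall N \near \oo, (0 < N)%N.
Proof. by exists 1%N. Qed.

Lemma analytic_cont k (D : set 'rV[R]_k) (f : 'rV[R]_k -> R) (w : 'rV[R]_k) :
  analytic_on D f -> D w -> nbhs w D -> {for w, continuous f}.
Proof.
move=> Han Dw Dn.
have [r [r0 [c Hc]]] := Han w Dw.
have [e e0 eD] := (nbhs_ballP _ _).1 Dn.
set E1 := enorm (const_mx 1 : 'rV[R]_k).
have E10 : 0 <= E1 by exact: enorm_ge0.
set t := r / (2 * (E1 + 1)).
have t0 : 0 < t by apply: divr_gt0 => //; lra.
have ht : t * (2 * (E1 + 1)) = r by rewrite /t mulrVK // unitfE; lra.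
set s := Num.min (e / 2) t.
have s0 : 0 < s by rewrite lt_min t0 andbT divr_gt0.
have se : s <= e / 2 by rewrite /s ge_min lexx.
have st : s <= t by rewrite /s ge_min lexx orbT.
have sr : s * E1 < r by nra.
pose xs := w + s *: const_mx 1.
have xsD : D xs.
  apply: eD; apply: ball_rV => // i; rewrite /xs !mxE mulr1 opprD addrA subrr add0r normrN gtr0_norm //; lra.
have xsr : enorm (xs - w) < r by rewrite /xs addrAC subrr add0r enormZ gtr0_norm.
have [[M HM] _] := Hc xs xsD xsr.
have coef : forall N (al : {ffun 'I_k -> 'I_N}),
    `|c (fun i => nat_of_ord (al i))| * \prod_i s ^+ al i <= M.
  move=> N al; apply: le_trans (HM N); rewrite /pabssum (bigD1 al) //=.
  have -> : \prod_i `|xs 0 i - w 0 i| ^+ al i = \prod_i s ^+ al i.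
    by apply: eq_bigr => i _; rewrite /xs !mxE mulr1 addrAC subrr add0r gtr0_norm.
  rewrite lerDl; apply: sumr_ge0 => a _; apply: mulr_ge0 => //.
  by apply: prodr_ge0 => i _; apply: exprn_ge0.
have M0 : 0 <= M.
  apply: le_trans (HM 0%N); apply: sumr_ge0 => a _; apply: mulr_ge0 => //.
  by apply: prodr_ge0 => i _; apply: exprn_ge0.
have bnd : forall (x : 'rV[R]_k) q N, 0 <= q -> q <= 1/2 -> (forall i, `|x 0 i - w 0 i| <= q * s) ->
    (0 < N)%N -> `|psum c w x N - psum c w w N| <= M * (2 * q * 2 ^+ k).
  move=> x q N q0 q1 hx N0.
  rewrite /psum -sumrB.
  apply: (le_trans (ler_norm_sum _ _ _)).
  apply: (@le_trans _ _ (M * \sum_(al : {ffun 'I_k -> 'I_N})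
       (\prod_i q ^+ al i - \prod_i (0:R) ^+ al i))); last first.
    by apply: ler_wpM2l => //; apply: sum_prod_bound.
  rewrite mulr_sumr; apply: ler_sum => al _.
  rewrite -mulrBr normrM.
  have -> : \prod_i (w 0 i - w 0 i) ^+ al i = \prod_i (0:R) ^+ al i.
    by apply: eq_bigr => i _; rewrite subrr.
  have hc := coef N al.
  case: (boolP [forall i, al i == 0 :> nat]) => [/forallP H|/forallPn [i0 Hi0]].
    rewrite !big1 ?subrr ?normr0 ?mulr0 // => i _; by rewrite (eqP (H i)) expr0.
  have P0 : \prod_i (0:R) ^+ al i = 0.
    by rewrite (bigD1 i0) //= expr0n (negbTE Hi0) mul0r.
  rewrite P0 !subr0 normr_prod.
  have hp : \prod_i `|(x 0 i - w 0 i) ^+ al i| <= \prod_i s ^+ al i * \prod_i q ^+ al i.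
    rewrite -big_split /=; apply: ler_prod => i _.
    rewrite normrX exprn_ge0 //= -exprMn; apply: lerXn2r; rewrite ?nnegrE //.
      by apply: mulr_ge0 => //; exact: ltW.
    by rewrite mulrC.
  have hq : 0 <= \prod_i q ^+ al i by apply: prodr_ge0 => i _; apply: exprn_ge0.
  apply: (le_trans (ler_wpM2l (normr_ge0 _) hp)).
  by rewrite mulrA; apply: ler_wpM2r.
have limb : forall (x : 'rV[R]_k) q, D x -> enorm (x - w) < r -> 0 <= q -> q <= 1/2 ->
    (forall i, `|x 0 i - w 0 i| <= q * s) -> `|f x - f w| <= M * (2 * q * 2 ^+ k).
  move=> x q Dx xr q0 q1 hx.
  have [_ cx] := Hc x Dx xr.
  have [_ cw] := Hc w Dw (ltac:(by rewrite subrr enorm0)).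
  have hn := cvg_norm (cvgB cx cw).
  apply: (ler_cvg_to (hn _ _) (cvg_cst _)).
  near=> N; apply: bnd => //; near: N; exact: near_pos.
apply: (proj2 (@cvgrPdist_le _ _ _ (nbhs w) _ f (f w))) => eps eps0.
set K := 2 * (M + 1) * 2 ^+ k.
have K0 : 0 < K by rewrite /K !mulr_gt0 ?exprn_gt0 //; lra.
set q := Num.min (1/2) (eps / K).
have q0 : 0 < q by rewrite lt_min (divr_gt0 eps0 K0) andbT; lra.
have q1 : q <= 1/2 by rewrite /q ge_min lexx.
have q2 : q <= eps / K by rewrite /q ge_min lexx orbT.
have hK : K * (eps / K) = eps by rewrite mulrC mulfVK // gt_eqF.
have p0 : 0 < 2 ^+ k :> R by rewrite exprn_gt0.
have hqK : M * (2 * q * 2 ^+ k) <= eps.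
  have : M * (2 * q * 2 ^+ k) <= K * q by rewrite /K; nra.
  have : K * q <= K * (eps / K) by apply: ler_wpM2l => //; exact: ltW.
  lra.
have cE : {for w, continuous (fun x : 'rV[R]_k => enorm (x - w))}.
  apply: (continuous_comp (f := fun x : 'rV[R]_k => x - w) (g := @enorm R k)); last exact: enorm_cont.
  have h := @cvgD _ _ _ (nbhs w) _ id (cst (- w)) w (- w) cvg_id (cvg_cst _); exact: h.
near=> x.
rewrite distrC; apply: le_trans hqK; apply: (limb x q _ _ (ltW q0) q1 _).
- near: x; exact: Dn.
- near: x; apply: (@cvgr_lt _ _ _ _ (fun x : 'rV[R]_k => enorm (x - w)) _ cE r).
  by rewrite subrr enorm0.
- near: x; apply: filterS (nbhsx_ballx w (q * s) (mulr_gt0 q0 s0)) => x /ball_rV' H i.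
  by rewrite distrC; apply: ltW.
Unshelve. all: by end_near.
Qed.

Lemma edist_le k (x a : 'rV[R]_k) (A : set 'rV[R]_k) :
  A a -> (set_edist x A <= (enorm (x - a))%:E)%E.
Proof. by move=> Aa; apply: ereal_inf_lbound; exists a. Qed.

Lemma edist_lb k (x : 'rV[R]_k) (A : set 'rV[R]_k) z :
  (forall a, A a -> (z <= (enorm (x - a))%:E)%E) -> (z <= set_edist x A)%E.
Proof. by move=> H; apply: le_ereal_inf_tmp => _ [a Aa <-]; exact: H. Qed.

Lemma edist_ge0 k (x : 'rV[R]_k) (A : set 'rV[R]_k) : (0 <= set_edist x A)%E.
Proof. by apply: edist_lb => a _; rewrite lee_fin enorm_ge0. Qed.

Lemma edist_mono k (x : 'rV[R]_k) (A B : set 'rV[R]_k) :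
  A `<=` B -> (set_edist x B <= set_edist x A)%E.
Proof.
move=> AB; apply: ereal_inf_le_tmp => _ [a Aa <-]; exists a => //; exact: AB.
Qed.

Lemma seg_cont k (x0 d : 'rV[R]_k) : continuous (fun t : R => x0 + t *: d).
Proof.
move=> t.
have h := @cvgD _ _ _ (nbhs t) _ (cst x0) (fun t : R => t *: d) x0 (t *: d)
  (cvg_cst _) (@continuousZr_tmp _ _ _ id d t cvg_id).
exact: h.
Qed.

Lemma seg_comp k (U' : set 'rV[R]_k) (x0 w : 'rV[R]_k) (rho : R) :
  open U' -> U' x0 ->
  (rho%:E <= set_edist x0 (bdry U'))%E ->
  enorm (x0 - w) < rho ->
  connected_component U' x0 w.
Proof.
move=> oU Ux0 rhoB xw.
pose S := (fun t : R => x0 + t *: (w - x0)) @` `[0, 1]%classic.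
have Scon : connected S.
  apply: connected_continuous_connected; first exact: segment_connected.
  exact/continuous_subspaceT/seg_cont.
have Sd : forall p, S p -> enorm (x0 - p) < rho.
  move=> _ [t t01 <-].
  move: t01; rewrite /= in_itv /= => /andP[t0 t1].
  rewrite opprD addrA subrr add0r enormN enormZ ger0_norm // enormB.
  apply: le_lt_trans xw; rewrite -[leRHS]mul1r; apply: ler_wpM2r => //.
  exact: enorm_ge0.
have SnB : forall p, S p -> ~ bdry U' p.
  move=> p Sp Bp; have := le_trans rhoB (@edist_le _ x0 p _ Bp).
  by rewrite lee_fin leNgt Sd.
have Sx0 : S x0.
  by exists 0; [rewrite /= in_itv /= lexx ler01 | rewrite scale0r addr0].
have SU : S `<=` U'.
  suff <- : S `&` U' = S by move=> p [].
  apply: Scon.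
  - by exists x0.
  - by exists U'.
  - exists (closure U'); first exact: closed_closure.
    apply/seteqP; split => p [Sp Up]; split => //.
      exact: subset_closure.
    by apply: contrapT => nUp; apply: (SnB p Sp).
have Sw : S w.
  by exists 1; [rewrite /= in_itv /= lexx ler01 | rewrite scale1r addrC subrK].
exact: connected_component_max Sx0 SU Scon w Sw.
Qed.

End H.
Arguments edist_le {R k} x {a A}.
Arguments edist_lb {R k x A z}.
Arguments edist_ge0 {R k} x A.
Arguments edist_mono {R k} x {A B}.
Arguments seg_comp {R k U' x0 w rho}.
Arguments analytic_cont {R k D f w}.
Arguments enorm_lsub {R m} v.
Arguments seg_cont {R k} x0 d.
Arguments enorm_ge0 {R k} v.

Lemma ivt_pos (R : realType) (g : R -> R) : {within `[0, 1], continuous g} ->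
  (forall t, 0 <= t <= 1 -> g t != 0) -> 0 < g 0 -> 0 < g 1.
Proof.
move=> gc gne g0; rewrite ltNge; apply/negP => g1.
have hv : Num.min (g 0) (g 1) <= 0 <= Num.max (g 0) (g 1).
  by rewrite ge_min le_max g1 orbT /= (ltW g0).
have [c cin gc0] := @IVT R g 0 1 0 ler01 gc hv.
by move: cin (gne c); rewrite in_itv /= gc0 eqxx => -> /(_ isT).
Qed.

Lemma lastc_cont (R : realType) (m : nat) : continuous (@lastc R m).
Proof.
move=> x; apply: (continuous_comp (f := rsubmx) (g := fun M : 'rV[R]_1 => M 0 0)).
  exact: continuous_rsubmx.
exact: coord_continuous.
Qed.

Lemma near_lt_enorm (R : realType) k (x0 w : 'rV[R]_k) rho :
  enorm (x0 - w) < rho -> \forall z \near w, enorm (x0 - z) < rho.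
Proof.
move=> h.
have cE : {for w, continuous (fun z : 'rV[R]_k => enorm (x0 - z))}.
  apply: (continuous_comp (f := fun z : 'rV[R]_k => x0 - z) (g := @enorm R k)); last exact: enorm_cont.
  have h' := @cvgB _ _ _ (nbhs w) _ (cst x0) id x0 w (cvg_cst _) cvg_id; exact: h'.
exact: (@cvgr_lt _ _ _ _ (fun z : 'rV[R]_k => enorm (x0 - z)) _ cE rho h).
Qed.

From mathcomp Require Import zify.

Lemma contB_fun (R : realType) (f g : R -> R) (x : R) :
  {for x, continuous f} -> {for x, continuous g} ->
  {for x, continuous (fun t => f t - g t)}.
Proof. move=> hf hg; exact: (continuousB hf hg). Qed.

Theorem lemma1 (R : realType) (m : nat)
  (U : set 'rV[R]_(m + 1)) (C eps Ct : R) (x0 : 'rV[R]_(m + 1))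
  (U' : set 'rV[R]_m)
  (k : nat) (phi : nat -> 'rV[R]_m -> R) (j : nat) :
  let X := closure U `\` U in
  let Cn := cone x0 eps in
  let U0 := connected_component U' (pi_proj x0) in
  let U1 := [set x | U0 (pi_proj x) /\ phi j (pi_proj x) < lastc x < phi j.+1 (pi_proj x)] in
  open U -> compact (closure U) -> subanalytic U ->
  proj_finite_on X ->
  0 < C -> 0 < eps -> U x0 ->
  regular_proj C eps x0 X ->
  1 <= Ct ->
  (set_edist x0 (X `\` Cn) <= Ct%:E * set_edist (pi_proj x0) (pi_proj @` (X `\` Cn)))%E ->
  (Ct%:E * set_edist (pi_proj x0) (pi_proj @` (X `\` Cn)) <= Ct%:E * set_edist (pi_proj x0) (discr X))%E ->
  open U' -> subanalytic U' -> U' `<=` pi_proj @` U `\` discr X -> U' (pi_proj x0) ->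
  (set_edist (pi_proj x0) (discr X) <= Ct%:E * set_edist (pi_proj x0) (bdry U'))%E ->
  (forall i, (i < k)%N -> analytic_on U0 (phi i)) ->
  (forall i, (i < k)%N -> exists M : R, forall y, U0 y -> `|phi i y| <= M) ->
  (forall i y, (i.+1 < k)%N -> U0 y -> phi i y < phi i.+1 y) ->
  X `&` pi_proj @^-1` U0 = [set x | U0 (pi_proj x) /\ exists i, (i < k)%N /\ lastc x = phi i (pi_proj x)] ->
  (j.+1 < k)%N -> U1 x0 ->
  (set_edist x0 X <= (Ct ^+ 2)%:E * set_edist x0 (bdry U1))%E.
Proof.
move=> X Cn U0 U1 oU cU sU pX C0 eps0 Ux0 reg Ct1 H1 H2 oU' sU' U'sub U'x0 H3
  phian phib phimono Xdec jk U1x0.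
have [U0x0 /andP[lo0 hi0]] := U1x0.
set x0' := pi_proj x0 in U0x0 lo0 hi0 H1 H2 H3 U'x0.
have Ct0 : 0 < Ct by lra.
have c0 : 0 < Ct ^+ 2 by rewrite exprn_gt0.
pose p0 : 'rV[R]_(m + 1) := row_mx x0' (const_mx (phi 0%N x0')).
have Xp0 : X p0.
  have : (X `&` pi_proj @^-1` U0) p0.
    rewrite Xdec /= /pi_proj /lastc row_mxKl row_mxKr mxE; split; first exact: U0x0.
    by exists 0%N; split; [exact: ltn_trans (ltn0Sn j) jk | ].
  by case.
have dXge0 := edist_ge0 x0 X.
have dXfin : set_edist x0 X = (fine (set_edist x0 X))%:E.
  rewrite fineK // ge0_fin_numE //.
  exact: le_lt_trans (edist_le x0 Xp0) (ltry _).
set D := fine (set_edist x0 X) in dXfin.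
suff key : forall y, bdry U1 y -> D <= Ct ^+ 2 * enorm (x0 - y).
  rewrite dXfin.
  have h : ((D / Ct ^+ 2)%:E <= set_edist x0 (bdry U1))%E.
    apply: edist_lb => a Ba; rewrite lee_fin.
    by rewrite -(ler_pM2l c0) [X in X <= _]mulrC divfK ?gt_eqF //; exact: key.
  have := lee_wpmul2l (_ : (0 <= (Ct ^+ 2)%:E)%E) h.
  rewrite -EFinM mulrC divfK ?gt_eqF //; apply.
  by rewrite lee_fin ltW.
move=> y [_ nU1y].
set del := enorm (x0 - y).
have del0 : 0 <= del by exact: enorm_ge0.
rewrite leNgt; apply/negP => hlt.
set dB := set_edist x0' (bdry U').
have hD : (D%:E <= (Ct * Ct)%:E * dB)%E.
  rewrite -dXfin EFinM -muleA.
  apply: le_trans (edist_mono x0 (_ : X `\` Cn `<=` X)) _; first by move=> p [].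
  apply: le_trans H1 _; apply: le_trans H2 _.
  by apply: lee_wpmul2l => //; rewrite lee_fin ltW.
have delD : del < D.
  have : del <= Ct ^+ 2 * del by rewrite -[leLHS]mul1r ler_wpM2r // expr_ge1 // ltW.
  lra.
have [rho [delrho rhoD rhoB]] : exists rho : R, [/\ del < rho, rho <= D & (rho%:E <= dB)%E].
  have hge : (0 <= dB)%E by exact: edist_ge0.
  move: hD hge; case: dB => [r| |] hD hge.
  - exists (Num.min D r); split.
    + rewrite lt_min delD /=.
      rewrite lee_fin in hD; rewrite expr2 in hlt.
      have : Ct * Ct * del < Ct * Ct * r by lra.
      by rewrite ltr_pM2l // mulr_gt0.
    + by rewrite ge_min lexx.
    + by rewrite lee_fin ge_min lexx orbT.
  - by exists D; split => //; rewrite leey.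
  - by [].
pose W := [set w : 'rV[R]_m | enorm (x0' - w) < rho].
have WU0 : W `<=` U0 by move=> w hw; exact: (seg_comp oU' U'x0 rhoB hw).
have Wn : forall w, W w -> nbhs w W by move=> w hw; exact: near_lt_enorm.
have phic : forall i w, (i < k)%N -> W w -> {for w, continuous (phi i)}.
  move=> i w hi hw; apply: (analytic_cont (phian i hi) (WU0 w hw)).
  exact: filterS WU0 (Wn w hw).
have notX : forall z, enorm (x0 - z) < D -> ~ X z.
  move=> z hz Xz; have := edist_le x0 Xz; rewrite dXfin lee_fin => h'.
  lra.
pose sig := fun t : R => x0 + t *: (y - x0).
have sigd : forall t, 0 <= t <= 1 -> enorm (x0 - sig t) <= del.
  move=> t /andP[t0 t1]; rewrite /sig opprD addrA subrr add0r enormN enormZ ger0_norm //.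
  rewrite enormB -[leRHS]mul1r; apply: ler_wpM2r => //.
have sigW : forall t, 0 <= t <= 1 -> W (pi_proj (sig t)).
  move=> t ht; rewrite /W /= /x0' /pi_proj -linearB /=.
  apply: le_lt_trans (enorm_lsub _) _.
  by apply: le_lt_trans (sigd t ht) _.
have sigX : forall t, 0 <= t <= 1 -> ~ X (sig t).
  move=> t ht; apply: notX; apply: le_lt_trans (sigd t ht) _; exact: delD.
have sigc : continuous sig by exact: seg_cont.
have ondec : forall t i, 0 <= t <= 1 -> (i < k)%N -> lastc (sig t) != phi i (pi_proj (sig t)).
  move=> t i ht hi; apply/negP => /eqP he.
  have : (X `&` pi_proj @^-1` U0) (sig t).
    by rewrite Xdec; split; [exact: WU0 (sigW t ht) | exists i].
  by case=> Xs _; exact: (sigX t ht Xs).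
have compc : forall i t, (i < k)%N -> 0 <= t <= 1 ->
    {for t, continuous (fun t => phi i (pi_proj (sig t)))}.
  move=> i t hi ht.
  apply: (continuous_comp (f := fun t => pi_proj (sig t)) (g := phi i)).
    apply: (continuous_comp (f := sig) (g := pi_proj)); first exact: sigc.
    exact: continuous_lsubmx.
  exact: phic hi (sigW t ht).
have lastcc : forall t, {for t, continuous (fun t => lastc (sig t))}.
  move=> t; apply: (continuous_comp (f := sig) (g := @lastc R m)); first exact: sigc.
  exact: lastc_cont.
have sig0 : sig 0 = x0 by rewrite /sig scale0r addr0.
have sig1 : sig 1 = y by rewrite /sig scale1r addrC subrK.
have g1 : 0 < lastc (sig 1) - phi j (pi_proj (sig 1)).
  apply: (@ivt_pos R (fun t => lastc (sig t) - phi j (pi_proj (sig t)))).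
  - apply: continuous_in_subspaceT => t; rewrite inE /= in_itv /= => ht.
    by apply: contB_fun; [exact: lastcc | exact: (compc j t (ltnW jk) ht)].
  - by move=> t ht; rewrite subr_eq0; apply: ondec => //; exact: ltnW.
  - by rewrite sig0 subr_gt0.
have h1 : 0 < phi j.+1 (pi_proj (sig 1)) - lastc (sig 1).
  apply: (@ivt_pos R (fun t => phi j.+1 (pi_proj (sig t)) - lastc (sig t))).
  - apply: continuous_in_subspaceT => t; rewrite inE /= in_itv /= => ht.
    by apply: contB_fun; [exact: (compc j.+1 t jk ht) | exact: lastcc].
  - by move=> t ht; rewrite subr_eq0 eq_sym; apply: ondec.
  - by rewrite sig0 subr_gt0.
apply: nU1y; rewrite -sig1; split.
  by apply: WU0; apply: sigW; rewrite lexx ler01.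
by apply/andP; split; rewrite -subr_gt0.
Qed.
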